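(* Let $b\ge2$, $n\ge1$ be integers and $\mathcal D=\{d,\dots,d+b-1\}$ a set of consecutive integers containing $0$. For $i,j\in\Omega_n(-b,\mathcal D)$, the transition probability $p_{i,j}=\Pr(C_{t+1}=j\mid C_t=i)$ of the $n$-carry process over $(-b,\mathcal D)$ is $$p_{i,j}=\frac{1}{b^n}\sum_{r=0}^{\,-j+1+\left\lfloor\frac{-i-1+(1-n)d}{b}\right\rfloor}(-1)^r\binom{n+1}{r}\binom{n-b(j-1+r)-i-1+(1-n)d}{n},$$ (an empty sum being $0$; in the range of summation the upper entries of the binomial coefficients are nonnegative integers, and $\binom{N}{n}=0$ for $0\le N<n$).
   Context: Carries process over the negative base $(-b,\mathcal D)$: let $\{X_{k,i}\}_{1\le k\le n,\ i\ge0}$ be independent random variables, each uniformly distributed on $\mathcal D$. Set $C_0=0$; for $i\ge0$ let $A_i$ be the unique element of $\mathcal D$ with $A_i\equiv C_i+X_{1,i}+\dots+X_{n,i}\pmod b$, and set $C_{i+1}=(C_i+X_{1,i}+\dots+X_{n,i}-A_i)/(-b)$. The state space $\Omega_n(-b,\mathcal D)$ is the set of integers $c$ with $\Pr(C_i=c)>0$ for some $i\ge0$. *)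

(* Defs.v *)
From HB Require Import structures.
From mathcomp Require Import all_boot all_order all_algebra.
Set Implicit Arguments. Unset Strict Implicit. Unset Printing Implicit Defensive.
Import Order.TTheory GRing.Theory Num.Theory.
Local Open Scope ring_scope.

(* Digit set D = {d, ..., d+b-1}; a digit is encoded by an offset x : 'I_b,
   standing for the digit d + x. *)

(* The unique element A of D with A = c + s (mod b). *)
Definition carry_digit (b : nat) (d c s : int) : int :=
  d + ((c + s - d) %% (b%:Z))%Z.

Definition carry_step (b : nat) (d c s : int) : int :=
  ((c + s - carry_digit b d c s) %/ (- (b%:Z)))%Z.

(* Outcome of the first T rows of the random digits: X_{k,i}, i < T, k < n. *)
Definition sample (n b T : nat) := {ffun 'I_T -> {ffun 'I_n -> 'I_b}}.

(* Value of the digit X_{k+1,i} (0-indexed k) for the outcome w (0 out of range). *)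
Definition digit (n b T : nat) (d : int) (w : sample n b T) (i k : nat) : int :=
  match (insub i : option 'I_T), (insub k : option 'I_n) with
  | Some i', Some k' => d + (nat_of_ord (w i' k'))%:Z
  | _, _ => 0
  end.

Fixpoint carry (n b T : nat) (d : int) (w : sample n b T) (i : nat) : int :=
  match i with
  | 0 => 0
  | i'.+1 => carry_step b d (carry d w i') (\sum_(k < n) digit d w i' k)
  end.

Definition prob (n b T : nat) (E : pred (sample n b T)) : rat :=
  #|[set w | E w]|%:R / #|{: sample n b T}|%:R.

Definition prob_carry (n b : nat) (d : int) (t : nat) (c : int) : rat :=
  prob (fun w : sample n b t => carry d w t == c).

Definition state_space (n b : nat) (d : int) (c : int) : Prop :=
  exists t : nat, 0 < prob_carry n b d t c.

Definition trans_prob (n b : nat) (d : int) (t : nat) (i j : int) : rat :=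
  prob (fun w : sample n b t.+1 => (carry d w t == i) && (carry d w t.+1 == j))
  / prob (fun w : sample n b t.+1 => carry d w t == i).

(* Generalized binomial coefficient binom(N, k) = N(N-1)...(N-k+1)/k! for N : int;
   agrees with 'C(N, k) for N >= 0. *)
Definition binz (N : int) (k : nat) : rat :=
  (\prod_(m < k) (N - m%:Z)%:~R) / (k`!)%:R.

Definition trans_formula (n b : nat) (d : int) (i j : int) : rat :=
  let U : int := - j + 1 + ((- i - 1 + (1 - n%:Z) * d) %/ b%:Z)%Z in
  (1 / (b%:R ^+ n)) *
  (if U < 0 then 0 else
   \sum_(r < (absz U).+1)
     (-1) ^+ r * ('C(n.+1, r))%:R *
     binz (n%:Z - b%:Z * (j - 1 + r%:Z) - i - 1 + (1 - n%:Z) * d) n).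

(* Main.v *)
Require Import Defs.
From HB Require Import structures.
From mathcomp Require Import all_boot all_order all_algebra.
From mathcomp Require Import ring lra zify.
Import Order.TTheory GRing.Theory Num.Theory.
Local Open Scope ring_scope.

Definition Qg (n M : nat) : {poly rat} := \poly_(k < M.+1) ('C(k + n, n))%:R.

Lemma Qstep n M : (1 - 'X) * Qg n.+1 M =
  Qg n M - ('C(M + n.+1, n.+1))%:R%:P * 'X^(M.+1).
Proof.
apply/polyP => l.
rewrite mulrBl mul1r !coefB coefXM coefCM coefXn /Qg !coef_poly.
case: l => [|l] /=.
  by rewrite !add0n !binn subr0 mulr0 subr0.
rewrite eqSS.
case: (ltngtP l M) => H.
- have H1 : (l.+1 < M.+1)%N by [].
  have H2 : (l < M.+1)%N by lia.
  rewrite H1 H2 mulr0 subr0 addSn binS natrD.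
  have -> : (l + n.+1 = (l+n).+1)%N by lia.
  by rewrite [X in X - _]addrC addrK addSn.
- have H1 : (l.+1 < M.+1)%N = false by lia.
  have H2 : (l < M.+1)%N = false by lia.
  by rewrite H1 H2 subr0 mulr0 subr0.
- subst l. rewrite ltnn ltnSn mulr1 !sub0r.
  by [].
Qed.

Lemma Q0 M : (1 - 'X) * Qg 0 M = 1 - 'X^(M.+1).
Proof.
apply/polyP => l.
rewrite mulrBl mul1r !coefB coefXM coefXn coef1 /Qg !coef_poly.
case: l => [|l] /=.
  by rewrite bin0 subr0.
rewrite eqSS.
case: (ltngtP l M) => H.
- have H1 : (l.+1 < M.+1)%N by [].
  have H2 : (l < M.+1)%N by lia.
  by rewrite H1 H2 !bin0 subrr sub0r oppr0.
- have H1 : (l.+1 < M.+1)%N = false by lia.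
  have H2 : (l < M.+1)%N = false by lia.
  by rewrite H1 H2 subrr.
- subst l. by rewrite ltnn ltnSn bin0.
Qed.

Lemma Qinv n M : exists R : {poly rat}, (1 - 'X) ^+ n.+1 * Qg n M = 1 + 'X^(M.+1) * R.
Proof.
elim: n => [|n [R HR]].
  exists (-1). by rewrite expr1 Q0 mulrN1.
exists (R - ('C(M + n.+1, n.+1))%:R%:P * (1 - 'X) ^+ n.+1).
rewrite exprSr -mulrA Qstep mulrBr HR. ring.
Qed.

Definition Pb (b : nat) : {poly rat} := \sum_(a < b) 'X^a.

Lemma PbX b : (1 - 'X) * Pb b = 1 - 'X^b.
Proof.
rewrite (_ : 1 - 'X^b = 1 ^+ b - 'X^b); last by rewrite expr1n.
rewrite subrXX /Pb. congr (_ * _).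
by apply: eq_bigr => i _; rewrite expr1n mul1r.
Qed.

Lemma coefP n b M : ((Pb b) ^+ n.+1)`_M =
  \sum_(r < n.+2) (-1) ^+ r * ('C(n.+1, r))%:R *
      (if (b * r <= M)%N then ('C(M - b * r + n, n))%:R else 0).
Proof.
have [R HR] := Qinv n M.
have E : (Pb b) ^+ n.+1 * (1 + 'X^(M.+1) * R) = (1 - 'X^b) ^+ n.+1 * Qg n M.
  by rewrite -HR -PbX exprMn; ring.
have := congr1 (fun p : {poly rat} => p`_M) E.
rewrite mulrDr mulr1 coefD mulrCA coefXnM ltnSn addr0 => ->.
rewrite exprBn mulr_suml coef_sum.
apply: eq_bigr => r _.
rewrite expr1n mulr1 -exprM mulrnAl coefMn -mulrA.
have -> : (-1 : {poly rat}) ^+ r = ((-1) ^+ r)%:P by rewrite rmorphXn rmorphN1.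
rewrite -mulrA coefCM coefXnM /Qg coef_poly.
case: (ltnP M (b*r)) => H /=.
  by rewrite !mulr0 mul0rn.
rewrite (_ : (M - b*r < M.+1)%N); last by lia.
rewrite -mulr_natr; ring.
Qed.

Lemma PbXn b n : Pb b ^+ n = \sum_(x : {ffun 'I_n -> 'I_b}) 'X^(\sum_k (x k : nat)).
Proof.
have -> : Pb b ^+ n = \prod_(k < n) Pb b by rewrite prodr_const card_ord.
rewrite /Pb bigA_distr_bigA. apply: eq_bigr => x _. by rewrite prodrXr.
Qed.

Lemma count_poly b n M : (Pb b ^+ n.+1)`_M =
  (\sum_(x : {ffun 'I_n -> 'I_b}) \sum_(y < b) (((\sum_k (x k : nat)) + y == M)%N : nat))%:R.
Proof.
rewrite exprSr PbXn mulr_suml coef_sum natr_sum; apply: eq_bigr => x _.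
rewrite /Pb mulr_sumr coef_sum natr_sum; apply: eq_bigr => y _.
by rewrite -exprD coefXn eq_sym.
Qed.

Lemma carry_step_eq b d c s j : (0 < b)%N ->
  (carry_step b d c s == j) = (0 <= c + s - d + j * b%:Z) && (c + s - d + j * b%:Z < b%:Z).
Proof.
move=> hb.
have bn0 : (b%:Z != 0) by rewrite eqz_nat -lt0n.
set m := c + s - d.
have E : c + s - carry_digit b d c s = (m %/ b%:Z)%Z * b%:Z.
  rewrite /carry_digit. have := divz_eq m b%:Z. rewrite -/m. lia.
rewrite /carry_step E divzN mulzK //.
apply/eqP/andP.
  move=> <-. rewrite mulNr. have := divz_eq m b%:Z.
  have := modz_ge0 m bn0. have : (m %% b%:Z)%Z < b%:Z by apply: ltz_pmod; rewrite ltz_nat.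
  lia.
move=> [h1 h2].
have -> : m = (- j) * b%:Z + (m + j * b%:Z) by ring.
rewrite divzMDl // divz_small; first by rewrite addr0 opprK.
by rewrite h1 /=.
Qed.

Lemma sum_y b T M : (\sum_(y < b) ((T + y == M)%N : nat) = ((T <= M) && (M - T < b))%N)%N.
Proof.
case: (boolP ((T <= M) && (M - T < b))%N) => H.
  move/andP: H => [h1 h2].
  rewrite (bigD1 (Ordinal h2)) //= big1 ?addn0; first by rewrite subnKC // eqxx.
  move=> y /eqP hy. apply/eqP; rewrite eqb0; apply/eqP => e; apply: hy.
  apply: val_inj => /=. lia.
apply: big1 => y _. apply/eqP; rewrite eqb0; apply/negP => /eqP e.
move/negP: H. have := ltn_ord y. lia.
Qed.

Definition Nf (b n : nat) (d c j : int) : int := (1 - n%:Z) * d - c - j * b%:Z + b%:Z - 1.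

Lemma cond_count b n d c j (T : nat) : (0 < b)%N ->
  ((carry_step b d c (n%:Z * d + T%:Z) == j) : nat) =
  (if 0 <= Nf b n d c j then (\sum_(y < b) ((T + y == absz (Nf b n d c j))%N : nat))%N else 0%N).
Proof.
move=> hb; rewrite carry_step_eq //.
case: (lerP 0 (Nf b n d c j)) => H.
  rewrite sum_y. set M := absz _.
  have hM : Nf b n d c j = M%:Z by rewrite /M gez0_abs.
  move: hM; rewrite /Nf => hM.
  congr nat_of_bool. apply/andP/andP => -[h1 h2]; split.
  - rewrite -(ler_nat int). lia.
  - rewrite -(ltr_nat int) natrB. lia. rewrite -(ler_nat int). lia.
  - lia.
  - move: h2; rewrite -(ltr_nat int) natrB. lia. rewrite -(ler_nat int). lia.
move: H; rewrite /Nf => H.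
rewrite (_ : (_ && _) = false) //. apply/negP => /andP [h1 h2]. lia.
Qed.

Definition hsplit (n b t : nat) (u : sample n b t) (x : {ffun 'I_n -> 'I_b}) : sample n b t.+1 :=
  [ffun i : 'I_t.+1 => if (insub (val i) : option 'I_t) is Some i' then u i' else x].

Arguments hsplit {n b t}.

Lemma digit_h n b t d u x i k : (i < t)%N -> digit d (@hsplit n b t u x) i k = digit d u i k.
Proof.
move=> hi; rewrite /digit /hsplit.
rewrite (insubT (fun i => i < t.+1)%N (ltnW hi : (i < t.+1)%N)).
rewrite (insubT (fun i => i < t)%N hi).
by rewrite ffunE /= (insubT (fun i => i < t)%N hi).
Qed.

Lemma digit_h_last n b t d u x (k : 'I_n) : digit d (@hsplit n b t u x) t k = d + (x k : nat)%:Z.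
Proof.
rewrite /digit /hsplit.
rewrite (insubT (fun i => i < t.+1)%N (ltnSn t)).
rewrite (insubT (fun i => i < n)%N (ltn_ord k)).
rewrite ffunE /= insubN ?ltnn //.
by congr (_ + _); congr (Posz (nat_of_ord (x _))); apply: val_inj.
Qed.

Lemma carry_h n b t d u x k : (k <= t)%N -> carry d (@hsplit n b t u x) k = carry d u k.
Proof.
elim: k => [|k IH] hk //=.
rewrite IH; last by lia.
congr carry_step. apply: eq_bigr => i _. by rewrite digit_h.
Qed.

Lemma carry_h_last n b t d u x : carry d (@hsplit n b t u x) t.+1 =
  carry_step b d (carry d u t) (\sum_(k < n) (d + (x k : nat)%:Z)).
Proof.
rewrite /= carry_h //. congr carry_step. apply: eq_bigr => k _. by rewrite digit_h_last.
Qed.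

Lemma card_split n b t (E : pred (sample n b t.+1)) :
  #|[set w | E w]| = (\sum_(u : sample n b t) \sum_(x : {ffun 'I_n -> 'I_b}) (E (hsplit u x) : nat))%N.
Proof.
rewrite pair_big /=.
have -> : #|[set w | E w]| = #|E| by rewrite cardsE.
rewrite -sum1_card big_mkcond /=.
have hb : bijective (fun p : sample n b t * {ffun 'I_n -> 'I_b} => hsplit p.1 p.2).
  exists (fun w : sample n b t.+1 =>
      ([ffun i : 'I_t => w (widen_ord (leqnSn t) i)], w ord_max)).
    move=> [u x] /=. congr pair.
      apply/ffunP => i. rewrite !ffunE /= (insubT (fun i => i < t)%N (ltn_ord i)).
      by congr (u _); apply: val_inj.
    by rewrite ffunE /= insubN ?ltnn.
  move=> w. apply/ffunP => i. rewrite ffunE /=.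
  case: insubP => [i' hi' vi'|hi].
    by rewrite ffunE; congr (w _); apply: val_inj.
  congr (w _); apply: val_inj => /=. have := ltn_ord i. lia.
rewrite (reindex _ (onW_bij _ hb)) /=.
by apply: eq_bigr => p _; rewrite unfold_in; case: (E _).
Qed.

Lemma card_pred (T : finType) (P : pred T) : #|[set u | P u]| = (\sum_u (P u : nat))%N.
Proof.
have -> : #|[set u | P u]| = #|P| by rewrite cardsE.
rewrite -sum1_card big_mkcond /=.
by apply: eq_bigr => p _; rewrite unfold_in; case: (P _).
Qed.

Lemma binz_nat (k n : nat) : binz k%:Z n = ('C(k, n))%:R.
Proof.
have H : \prod_(m < n) (k%:Z - m%:Z) = (k ^_ n)%:Z.
  elim: n => [|n IH]; first by rewrite big_ord0.
  rewrite big_ord_recr /= IH ffactnSr.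
  case: (leqP n k) => h.
    by rewrite PoszM subzn.
  rewrite ffact_small //. by rewrite mul0r.
rewrite /binz -rmorph_prod /= H -bin_ffact -pmulrn natrM mulfK //.
by rewrite pnatr_eq0 -lt0n fact_gt0.
Qed.

Lemma sum_extend (F : nat -> rat) a c : (a <= c)%N ->
  (forall r, (a <= r < c)%N -> F r = 0) ->
  \sum_(r < a) F r = \sum_(r < c) F r.
Proof.
move=> hac hF. rewrite -!(big_mkord xpredT) (@big_cat_nat _ _ _ a 0 c _ _ (leq0n a) hac) /=.
rewrite [X in _ + X]big1_seq ?addr0 // => r /andP [_].
rewrite mem_index_iota => h. exact: hF.
Qed.

Lemma Posz_sum n (F : 'I_n -> nat) : Posz (\sum_(k < n) F k)%N = \sum_(k < n) Posz (F k).
Proof. by rewrite -[LHS]intz sumMz; apply: eq_bigr => k _; rewrite intz. Qed.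

Theorem theorem3 (b n : nat) (d : int) (i j : int) (t : nat) :
  (2 <= b)%N -> (1 <= n)%N ->
  d <= 0 -> 0 <= d + (b%:Z - 1) ->
  state_space n b d i -> state_space n b d j ->
  0 < prob_carry n b d t i ->
  trans_prob n b d t i j = trans_formula n b d i j.
Proof.
move=> hb hn _ _ _ _ hpos.
have hb0 : (0 < b)%N by lia.
set A := #|[set u : sample n b t | carry d u t == i]|.
set K := (\sum_(x : {ffun 'I_n -> 'I_b})
   ((carry_step b d i (\sum_(k < n) (d + (x k : nat)%:Z)) == j) : nat))%N.
have hA : A != 0%N.
  apply/eqP => hA0. move: hpos. by rewrite /prob_carry /prob -/A hA0 mul0r ltxx.
have E1 : #|[set w : sample n b t.+1 | (carry d w t == i) && (carry d w t.+1 == j)]| = (A * K)%N.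
  rewrite card_split /A card_pred big_distrl /=. apply: eq_bigr => u _.
  transitivity (\sum_(x : {ffun 'I_n -> 'I_b}) ((carry d u t == i) &&
     (carry_step b d (carry d u t) (\sum_(k < n) (d + (x k : nat)%:Z)) == j) : nat))%N.
    apply: eq_bigr => x _. rewrite carry_h //.
    congr (nat_of_bool (_ && (carry_step _ _ _ _ == _))).
    by apply: eq_bigr => k _; rewrite digit_h_last.
  case: (boolP (carry d u t == i)) => [/eqP ->|hu] /=; first by rewrite mul1n.
  by rewrite mul0n big1.
have E2 : #|[set w : sample n b t.+1 | carry d w t == i]| = (A * b ^ n)%N.
  rewrite card_split /A card_pred big_distrl /=. apply: eq_bigr => u _.
  under eq_bigr => x _ do rewrite carry_h //.
  by rewrite sum_nat_const card_ffun !card_ord mulnC.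
have hN : (#|{: sample n b t.+1}|%:R : rat) != 0.
  rewrite pnatr_eq0 -lt0n card_ffun card_ffun !card_ord expn_gt0 expn_gt0 hb0. by [].
rewrite /trans_prob /prob E1 E2.
rewrite invf_div mulrA divfK // natrM natrM -mulf_div divff ?pnatr_eq0 // mul1r.
rewrite /trans_formula mulrC div1r; congr (_ * _); first by rewrite natrX.
have hK : K = (\sum_(x : {ffun 'I_n -> 'I_b})
   (if (0 <= Nf b n d i j)%R then \sum_(y < b)
      (((\sum_k (x k : nat)) + y == absz (Nf b n d i j))%N : nat) else 0))%N.
  apply: eq_bigr => x _. rewrite -cond_count //.
  congr (nat_of_bool (carry_step _ _ _ _ == _)).
  rewrite big_split /= sumr_const card_ord Posz_sum -mulr_natl. by rewrite natz.
have -> : - j + 1 + ((- i - 1 + (1 - n%:Z) * d) %/ b%:Z)%Z = (Nf b n d i j %/ b%:Z)%Z.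
  rewrite /Nf.
  have -> : (1 - n%:Z) * d - i - j * b%:Z + b%:Z - 1 = (1 - j) * b%:Z + (- i - 1 + (1 - n%:Z) * d) by ring.
  rewrite divzMDl; first by ring. by rewrite eqz_nat -lt0n.
case: (lerP 0 (Nf b n d i j)) => hN0; last first.
  have -> : K = 0%N by rewrite hK big1 // => x _; rewrite leNgt hN0.
  have -> : (Nf b n d i j %/ b%:Z)%Z < 0.
    rewrite ltNge divz_ge0 ?ltz_nat //. by rewrite -ltNge.
  by [].
set M := absz (Nf b n d i j).
have hM : Nf b n d i j = M%:Z by rewrite /M gez0_abs.
rewrite hK hM divz_nat /=.
rewrite -count_poly coefP.
pose G := fun r : nat => (-1) ^+ r * ('C(n.+1, r))%:R *
      (if (b * r <= M)%N then ('C(M - b * r + n, n))%:R else 0 : rat).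
have hMb : (M %/ b * b <= M)%N by apply: leq_divM.
transitivity (\sum_(r < (M %/ b).+1 + n.+2) G r).
  apply: sum_extend; first by rewrite addnC ltn_addr.
  move=> r /andP [h1 h2]. rewrite /G bin_small ?mulr0 ?mul0r //.
transitivity (\sum_(r < (M %/ b).+1) G r); last first.
  apply: eq_bigr => r _. rewrite /G.
  have hr : (b * r <= M)%N.
    have := ltn_ord r. rewrite ltnS => hr. apply: leq_trans hMb. rewrite mulnC. exact: leq_mul.
  rewrite hr; congr (_ * _).
  have -> : n%:Z - b%:Z * (j - 1 + (r : nat)%:Z) - i - 1 + (1 - n%:Z) * d = (M - b * r + n)%N%:Z.
    move: hM; rewrite /Nf => hM. rewrite PoszD -(subzn hr) PoszM. lia.
  by rewrite binz_nat.
symmetry; apply: sum_extend; first by lia.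
move=> r /andP [h1 h2]. rewrite /G.
have : (M < b * r)%N.
  by rewrite mulnC -ltn_divLR.
by rewrite ltnNge => /negbTE ->; rewrite mulr0.
Qed.
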